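(* Let $k$ be a field of characteristic $p>2$ ($p$ prime) and let $m\ge1$. Then for any $i$ with $1\le i\le 2m$, $$w_m(x_1,x_2,\ldots,x_ix_{2m+1},\ldots,x_{2m})\in\{x_0^pw_j\mid j\ge0\}^{S_0}+T(G),$$ while for any $\alpha\in k$, $$w_m(x_1,x_2,\ldots,\alpha x_i,\ldots,x_{2m})=\alpha^pw_m(x_1,x_2,\ldots,x_i,\ldots,x_{2m}).$$
   Context: $X=\{x_i\mid i\ge0\}$ countably infinite; $k_1\langle X\rangle$ (resp. $k_0\langle X\rangle\subseteq k_1\langle X\rangle$) the free unitary (resp. nonunitary) associative $k$-algebra on $X$. $[a,b]=ab-ba$. $H^{S_0}$ is the smallest subspace of $k_0\langle X\rangle$ containing $H$ and invariant under all endomorphisms of $k_0\langle X\rangle$. $G$ is the infinite-dimensional unitary Grassmann algebra over $k$ (basis $1$ and the products $e_{i_1}\cdots e_{i_n}$, $n\ge1$, $i_1<\dots<i_n$, with $e_ie_j=-e_je_i$, $e_i^2=0$); $T(G)$ is the set of $f\in k_1\langle X\rangle$ in the kernel of every unitary homomorphism $k_1\langle X\rangle\to G$. $\kappa(u,v)=[u,v]u^{p-1}v^{p-1}$, $w_m=\prod_{r=1}^m\kappa(x_{2r-1},x_{2r})$ for $m\ge1$, $w_0=1$, and $w_m(u_1,\ldots,u_{2m})$ is the image of $w_m$ under $x_j\mapsto u_j$ ($1\le j\le 2m$); in the displayed expressions only the $i$-th argument is changed. *)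

(* Defs.v *)
From HB Require Import structures.
From mathcomp Require Import all_boot all_order all_algebra.
From mathcomp Require Import finmap.
From mathcomp.multinomials Require Import monalg.

Set Implicit Arguments.
Unset Strict Implicit.
Unset Printing Implicit Defensive.

Import Order.TTheory GRing.Theory Num.Theory.
Local Open Scope ring_scope.

Section FreeAlg.
Variable k : fieldType.

(* k_1<X> : the free unitary associative k-algebra on X = {x_i | i >= 0},
   realised as the monoid algebra of the free monoid on nat. *)
Definition FA : Type := {malg k[{fmonom nat}]}.

Definition xv (i : nat) : FA := << fmu i >>.

(* k_0<X> : the nonunitary free algebra = elements with zero coefficient on
   the empty word (span of the nonempty words). *)
Definition in_k0 (f : FA) : Prop := f@_(fmone nat) = 0.

(* k-algebra endomorphisms of the (nonunitary) algebra k_0<X>; only the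
   behaviour on k_0<X> matters. *)
Definition is_endo0 (phi : FA -> FA) : Prop :=
  [/\ (forall f, in_k0 f -> in_k0 (phi f)),
      (forall f g, in_k0 f -> in_k0 g -> phi (f + g) = phi f + phi g),
      (forall (a : k) f, in_k0 f -> phi (a *: f) = a *: phi f) &
      (forall f g, in_k0 f -> in_k0 g -> phi (f * g) = phi f * phi g)].

Definition is_subspace0 (V : FA -> Prop) : Prop :=
  [/\ (forall f, V f -> in_k0 f), V 0,
      (forall f g, V f -> V g -> V (f + g)) &
      (forall (a : k) f, V f -> V (a *: f))].

(* H^{S_0}: the smallest subspace of k_0<X> containing H and invariant under
   all endomorphisms of k_0<X> (intersection of all such subspaces). *)
Definition S0closure (H : FA -> Prop) (f : FA) : Prop :=
  forall V : FA -> Prop, is_subspace0 V ->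
    (forall h, H h -> V h) ->
    (forall phi, is_endo0 phi -> forall g, V g -> V (phi g)) ->
    V f.

(* ---- The infinite-dimensional unitary Grassmann algebra G over k ----
   Basis: e_S for S a finite subset of nat (e_{fset0} = 1, and
   e_S = e_{i_1} ... e_{i_n} for S = {i_1 < ... < i_n}). *)
Definition Grass : Type := {malg k[{fset nat}]}.

Definition ginv (A B : {fset nat}) : nat :=
  (\sum_(a <- A) \sum_(b <- B) (b < a))%N.

Definition gsign (A B : {fset nat}) : k :=
  if [disjoint A & B]%fset then (-1) ^+ ginv A B else 0.

Definition gone : Grass := << fset0 >>.

Definition gmul (f g : Grass) : Grass :=
  \sum_(A <- msupp f) \sum_(B <- msupp g)
     << (f@_A * g@_B * gsign A B) *g (A `|` B)%fset >>.

Definition is_unital_hom_G (psi : FA -> Grass) : Prop :=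
  [/\ (forall f g, psi (f + g) = psi f + psi g),
      (forall (a : k) f, psi (a *: f) = a *: psi f),
      (forall f g, psi (f * g) = gmul (psi f) (psi g)) &
      psi 1 = gone].

Definition TG (f : FA) : Prop :=
  forall psi, is_unital_hom_G psi -> psi f = 0.

Definition kappa (p : nat) (u v : FA) : FA :=
  (u * v - v * u) * u ^+ p.-1 * v ^+ p.-1.

Definition wm (p m : nat) (u : nat -> FA) : FA :=
  \prod_(1 <= r < m.+1) kappa p (u (2 * r).-1) (u (2 * r)).

Definition w (p m : nat) : FA := wm p m xv.

End FreeAlg.

(* Main.v *)
Require Import Defs.
From HB Require Import structures.
From mathcomp Require Import all_boot all_order all_algebra.
From mathcomp Require Import finmap.
From mathcomp.multinomials Require Import monalg.
From mathcomp Require Import ring zify.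
Import GRing.Theory.
Set Implicit Arguments.
Unset Strict Implicit.
Unset Printing Implicit Defensive.
Local Open Scope fset_scope.
Local Open Scope ring_scope.

Section Abs.
Variables (R : ringType) (p : nat) (E O : R -> R).
Hypothesis EO : forall x, E x + O x = x.
Hypothesis Ecent : forall x y, E x * y = y * E x.
Hypothesis Oanti : forall x y, O x * O y = - (O y * O x).
Hypothesis OO : forall x, O x * O x = 0.
Hypothesis EM : forall x y, E (x * y) = E x * E y + O x * O y.
Hypothesis OM : forall x y, O (x * y) = E x * O y + O x * E y.
Hypothesis charp : p \in [pchar R].
Hypothesis p_gt2 : (2 < p)%N.

Definition kap (u v : R) := (u * v - v * u) * u ^+ p.-1 * v ^+ p.-1.

Lemma powD_nil (X Y : R) n : X * Y = Y * X -> Y * Y = 0 ->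
  (X + Y) ^+ n.+1 = X ^+ n.+1 + X ^+ n * Y *+ n.+1.
Proof.
move=> cXY hYY; elim: n => [|n IHn]; first by rewrite expr1 expr0 mul1r.
rewrite exprSr IHn mulrDl !mulrDr -exprSr mulrnAl mulrnAl -[_ * Y * Y]mulrA hYY mulr0 mul0rn addr0.
rewrite -[_ * Y * X]mulrA -cXY mulrA -exprSr -addrA -mulrS.
done.
Qed.

Lemma EXcent x n y : E x ^+ n * y = y * E x ^+ n.
Proof. by apply/esym/commrX; rewrite /GRing.comm Ecent. Qed.

Lemma powE x : x ^+ p = E x ^+ p.
Proof.
have H : (E x + O x) ^+ p = E x ^+ p + O x ^+ p.
  by have := pFrobenius_autD_comm charp (Ecent x (O x)); rewrite !pFrobenius_autE.
rewrite -{1}(EO x) H.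
have -> : O x ^+ p = 0.
  by case: p p_gt2 => [|[|[|q]]] // _; rewrite exprS mulrA OO mul0r.
by rewrite addr0.
Qed.

Lemma addKsub (x y z : R) : (x + y) - (x + z) = y - z.
Proof. by rewrite (addrC x y) addrKA. Qed.

Lemma commE u v : u * v - v * u = O u * O v *+ 2.
Proof.
rewrite -[in LHS](EO u) mulrDl mulrDr Ecent addKsub.
rewrite -[in LHS](EO v) mulrDl mulrDr (Ecent v (O u)) addKsub.
by rewrite (Oanti v u) opprK mulr2n.
Qed.

Definition cent (z : R) := forall y, z * y = y * z.
Lemma centE x : cent (E x). Proof. exact: Ecent. Qed.
Lemma centX z n : cent z -> cent (z ^+ n).
Proof. by move=> cz y; apply/esym/commrX; rewrite /GRing.comm cz. Qed.
Lemma centM z w : cent z -> cent w -> cent (z * w).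
Proof. by move=> cz cw y; rewrite -mulrA cw mulrA cz mulrA. Qed.

Lemma Oodd3 x y : O x * O y * O x = 0.
Proof. by rewrite -mulrA (Oanti y x) mulrN mulrA OO mul0r oppr0. Qed.
Lemma Oswap2 x y z : O x * O y * O z = O y * O z * O x.
Proof. by rewrite (Oanti x y) mulNr -[O y * O x * O z]mulrA (Oanti x z) mulrN opprK mulrA. Qed.

Lemma kapE u v : kap u v = O u * O v * E u ^+ p.-1 * E v ^+ p.-1 *+ 2.
Proof.
have hq : p.-1 = p.-2.+1 by case: (p) p_gt2 => [|[|n]].
set q := p.-2 in hq.
have hpow x : x ^+ q.+1 = E x ^+ q.+1 + E x ^+ q * O x *+ q.+1.
  by rewrite -{1}(EO x) powD_nil // Ecent.
rewrite /kap commE hq (hpow u) (hpow v) !mulrnAl; congr (_ *+ 2).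
have Z1 : O u * O v * (E u ^+ q * O u) = 0.
  by rewrite mulrA -(centX q (centE u)) -mulrA Oodd3 mulr0.
have Z2 : O u * O v * E u ^+ q.+1 * (E v ^+ q * O v) = 0.
  by rewrite -(centX _ (centE u) (O u * O v)) (centX q (centE v) (O v)) -!mulrA (mulrA (O v) (O v)) OO mul0r !mulr0.
rewrite [O u * O v * _]mulrDr mulrnAr Z1 mul0rn addr0 mulrDr mulrnAr Z2 mul0rn addr0.
done.
Qed.

Lemma cent_powp x : cent (x ^+ p).
Proof. by rewrite powE; exact: centX (centE x). Qed.

Lemma kap_anti u v : kap v u = - kap u v.
Proof.
rewrite !kapE (Oanti v u) -mulrA (centX _ (centE v)) mulrA !mulNr.
by rewrite mulNrn.
Qed.

Lemma kapMl a c b : kap (a * c) b = a ^+ p * kap c b + c ^+ p * kap a b.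
Proof.
have hq : p.-1 = p.-2.+1 by case: (p) p_gt2 => [|[|n]].
have hp2 : p = p.-2.+2 by case: (p) p_gt2 => [|[|n]].
set q := p.-2 in hq hp2.
rewrite !kapE OM EM (powE a) (powE c) !mulrnAr -mulrnDl; congr (_ *+ 2).
rewrite hq.
set A := E a; set C := E c; set a1 := O a; set c1 := O c; set b1 := O b; set B := E b.
have cA : cent A by exact: centE.
have cC : cent C by exact: centE.
have cAC : cent (A * C) by exact: centM.
have hE : (A * C + a1 * c1) ^+ q.+1 = (A * C) ^+ q.+1 + (A * C) ^+ q * (a1 * c1) *+ q.+1.
  apply: powD_nil; first exact: cAC.
  by rewrite mulrA Oodd3 mul0r.
have T1 : A * c1 * b1 * (a1 * c1) = 0.
  by rewrite -mulrA (mulrA b1) (Oswap2 b a c) -(mulrA A) (mulrA c1) (mulrA c1 a1) Oodd3 mul0r mulr0.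
have T2 : a1 * C * b1 * (a1 * c1) = 0.
  by rewrite -(cC a1) -!mulrA (mulrA b1) (mulrA a1) (mulrA a1 b1) Oodd3 mul0r mulr0.
rewrite hE [(A * c1 + a1 * C) * b1 * _]mulrDr mulrnAr.
have -> : (A * c1 + a1 * C) * b1 * ((A * C) ^+ q * (a1 * c1)) = 0.
  rewrite (centX q cAC (a1 * c1)) mulrA !mulrDl.
  by rewrite T1 T2 !mul0r addr0.
rewrite mul0rn addr0.
rewrite (exprMn_comm _ (cA C)) !mulrDl hp2; congr (_ + _).
  by rewrite !mulrA -(centX _ cA (A * c1 * b1)) !mulrA -exprSr.
by rewrite -(cC a1) (centX _ cA (C ^+ _)) !mulrA -(centX _ cC (C * a1 * b1)) !mulrA -exprSr.
Qed.

Lemma kapMr a c b : kap b (a * c) = a ^+ p * kap b c + c ^+ p * kap b a.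
Proof.
rewrite (kap_anti (a * c) b) kapMl opprD -(mulrN (a ^+ p)) -(mulrN (c ^+ p)).
by rewrite -(kap_anti c b) -(kap_anti a b).
Qed.

End Abs.

Section ProdLin.
Variable R : ringType.

Lemma prod_out (F F1 : nat -> R) r0 n : (n <= r0)%N ->
  (forall r, r != r0 -> F r = F1 r) ->
  \prod_(1 <= r < n) F r = \prod_(1 <= r < n) F1 r.
Proof.
move=> hn hF; apply: eq_big_nat => i /andP[_ hi]; apply: hF.
by rewrite neq_ltn (leq_trans hi hn).
Qed.

Lemma prod_lin (F F1 F2 : nat -> R) (al be : R) r0 n :
  (forall y, al * y = y * al) -> (forall y, be * y = y * be) ->
  (1 <= r0 < n)%N ->
  (forall r, r != r0 -> F r = F1 r) -> (forall r, r != r0 -> F r = F2 r) ->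
  F r0 = al * F1 r0 + be * F2 r0 ->
  \prod_(1 <= r < n) F r = al * \prod_(1 <= r < n) F1 r + be * \prod_(1 <= r < n) F2 r.
Proof.
move=> cal cbe /andP[h1 hr] h1F h2F h0.
elim: n hr => [//|n IHn] hr.
have hn1 : (1 <= n)%N by apply: leq_trans h1 _.
rewrite !big_nat_recr //=.
have [e|ne] := eqVneq r0 n.
  subst r0; rewrite -(prod_out (leqnn n) h2F) (prod_out (leqnn n) h1F) h0.
  by rewrite mulrDr !mulrA -cal -cbe.
rewrite IHn; last by rewrite ltn_neqAle ne -ltnS.
by rewrite mulrDl -!mulrA -(h1F n) ?(h2F n) // eq_sym.
Qed.
End ProdLin.

Section CentScal.
Variables (R : ringType) (p : nat).
Hypothesis p_gt0 : (0 < p)%N.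

Lemma kap_centl (z u v : R) : (forall y, z * y = y * z) ->
  kap p (z * u) v = z ^+ p * kap p u v.
Proof.
move=> cz; rewrite /kap (exprMn_comm _ (cz u)).
have -> : z * u * v - v * (z * u) = z * (u * v - v * u).
  by rewrite mulrBr !mulrA -cz.
have cX n : forall y, z ^+ n * y = y * z ^+ n.
  by move=> y; apply/esym/commrX; rewrite /GRing.comm cz.
set X := u * v - v * u.
by rewrite mulrA -(cX _ (z * X)) !mulrA -exprSr prednK.
Qed.

Lemma kap_centr (z u v : R) : (forall y, z * y = y * z) ->
  kap p u (z * v) = z ^+ p * kap p u v.
Proof.
move=> cz; rewrite /kap (exprMn_comm _ (cz v)).
have -> : u * (z * v) - z * v * u = z * (u * v - v * u).
  by rewrite mulrBr !mulrA -cz.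
have cX n : forall y, z ^+ n * y = y * z ^+ n.
  by move=> y; apply/esym/commrX; rewrite /GRing.comm cz.
set X := u * v - v * u.
by rewrite mulrA -(cX _ (z * X * u ^+ p.-1)) !mulrA -exprSr prednK.
Qed.
End CentScal.

Lemma kap_morph (R S : ringType) (f : R -> S) p
  (fM : forall x y, f (x * y) = f x * f y) (fB : forall x y, f (x - y) = f x - f y)
  (fX : forall x n, f (x ^+ n) = f x ^+ n) u v :
  f (kap p u v) = kap p (f u) (f v).
Proof. by rewrite /kap !fM fB !fM !fX. Qed.

Section Grassmann.
Variable k : fieldType.
Local Notation G := (Grass k).
Local Notation gsign := (gsign k).
Implicit Types (f g h : G) (A B C S : {fset nat}).

Lemma gmul_w (d1 d2 : {fset {fset nat}}) f g :
  msupp f `<=` d1 -> msupp g `<=` d2 ->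
  gmul f g = \sum_(A <- d1) \sum_(B <- d2) << f@_A * g@_B * gsign A B *g (A `|` B) >>.
Proof.
move=> le_d1 le_d2; rewrite /gmul (big_fset_incl _ le_d1) /=.
  apply/eq_bigr=> k1 _; apply/big_fset_incl => // k0 _ /mcoeff_outdom ->.
  by rewrite mulr0 mul0r monalgU0.
move=> k0 _ /mcoeff_outdom g1k.
by rewrite big1 => // k' _; rewrite g1k !mul0r monalgU0.
Qed.

Lemma gmulDl f1 f2 g : gmul (f1 + f2) g = gmul f1 g + gmul f2 g.
Proof.
rewrite [in RHS](@gmul_w (msupp f1 `|` msupp f2) (msupp g)) ?fsubsetUl //.
rewrite [in RHS](@gmul_w (msupp f1 `|` msupp f2) (msupp g)) ?fsubsetUr //.
rewrite (@gmul_w (msupp f1 `|` msupp f2) (msupp g)) ?msuppD_le //.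
rewrite -big_split /=; apply/eq_bigr=> k1 _.
rewrite -big_split /=; apply/eq_bigr=> k2 _.
by rewrite mcoeffD !mulrDl monalgUD.
Qed.

Lemma gmulDr f g1 g2 : gmul f (g1 + g2) = gmul f g1 + gmul f g2.
Proof.
rewrite [in RHS](@gmul_w (msupp f) (msupp g1 `|` msupp g2)) ?fsubsetUl //.
rewrite [in RHS](@gmul_w (msupp f) (msupp g1 `|` msupp g2)) ?fsubsetUr //.
rewrite (@gmul_w (msupp f) (msupp g1 `|` msupp g2)) ?msuppD_le //.
rewrite -big_split /=; apply/eq_bigr=> k1 _.
rewrite -big_split /=; apply/eq_bigr=> k2 _.
by rewrite mcoeffD mulrDr mulrDl monalgUD.
Qed.

Lemma gmul0f f : gmul 0 f = 0.
Proof. by rewrite /gmul msupp0 big_seq_fset0. Qed.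
Lemma gmulf0 f : gmul f 0 = 0.
Proof. by rewrite /gmul msupp0; apply: big1 => i _; rewrite big_seq_fset0. Qed.

Lemma gmulUg c A g :
  gmul << c *g A >> g = \sum_(B <- msupp g) << c * g@_B * gsign A B *g A `|` B >>.
Proof.
rewrite (@gmul_w [fset A] (msupp g)) ?msuppU_le // big_seq_fset1.
by apply/eq_bigr => k' _; rewrite mcoeffUU.
Qed.

Lemma gmulgU c B g :
  gmul g << c *g B >> = \sum_(A <- msupp g) << g@_A * c * gsign A B *g A `|` B >>.
Proof.
rewrite (@gmul_w (msupp g) [fset B]) ?msuppU_le //.
by apply/eq_bigr => k' _; rewrite big_seq_fset1 mcoeffUU.
Qed.

Lemma gmulUU c1 c2 A B :
  gmul << c1 *g A >> << c2 *g B >> = << c1 * c2 * gsign A B *g A `|` B >>.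
Proof. by rewrite (@gmul_w [fset A] [fset B]) ?msuppU_le // !big_seq_fset1 !mcoeffUU. Qed.

Lemma gmulEl1 f g : gmul f g = \sum_(A <- msupp f) gmul << f@_A *g A >> g.
Proof. by apply/eq_bigr=> A _; rewrite gmulUg. Qed.

Lemma gmulEr1 f g : gmul f g = \sum_(B <- msupp g) gmul f << g@_B *g B >>.
Proof. by rewrite [LHS]/gmul exchange_big; apply/eq_bigr=> B _; rewrite gmulgU. Qed.

Lemma perm_fsetU A B : [disjoint A & B] -> perm_eq (A `|` B) (A ++ B).
Proof.
move=> dAB; apply: uniq_perm; first exact: fset_uniq.
  rewrite cat_uniq !fset_uniq /= andbT; apply/hasPn => x xB.
  by apply/negP => xA; move/fdisjointP: dAB => /(_ x xA); rewrite xB.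
by move=> x; rewrite mem_cat in_fsetU.
Qed.

Lemma ginvUl A B C : [disjoint A & B] -> ginv (A `|` B) C = (ginv A C + ginv B C)%N.
Proof. by move=> dAB; rewrite /ginv (perm_big _ (perm_fsetU dAB)) big_cat. Qed.

Lemma ginvUr A B C : [disjoint B & C] -> ginv A (B `|` C) = (ginv A B + ginv A C)%N.
Proof.
move=> dBC; rewrite /ginv -big_split /=; apply: eq_bigr => a _.
by rewrite (perm_big _ (perm_fsetU dBC)) big_cat.
Qed.

Lemma gsignA A B C : gsign A B * gsign (A `|` B) C = gsign B C * gsign A (B `|` C).
Proof.
rewrite /gsign fdisjointUX fdisjointXU.
case dAB: [disjoint A & B]; case dAC: [disjoint A & C]; case dBC: [disjoint B & C] => /=;
  rewrite ?mul0r ?mulr0 //.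
by rewrite ginvUl // ginvUr // !exprD; ring.
Qed.

Lemma ginv_sym A B : [disjoint A & B] -> (ginv A B + ginv B A)%N = (#|` A| * #|` B|)%N.
Proof.
move=> dAB; rewrite /ginv [X in (_ + X)%N]exchange_big -big_split /=.
have -> : (#|` A| * #|` B| = \sum_(a <- A) \sum_(b <- B) 1)%N.
  under [RHS]eq_bigr do rewrite sum1_size.
  by rewrite big_const_seq count_predT iter_addn_0 mulnC.
rewrite big_seq [RHS]big_seq; apply: eq_bigr => a aA.
rewrite -big_split /= big_seq [RHS]big_seq.
apply: eq_bigr => b bB.
have : b != a by apply: contraTneq bB => ->; move/fdisjointP: dAB => /(_ a aA).
by case: ltngtP.
Qed.

Lemma gsign_sym A B : gsign A B = (-1) ^+ (#|` A| * #|` B|) * gsign B A.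
Proof.
rewrite /gsign fdisjoint_sym; case dBA: [disjoint B & A]; last by rewrite mulr0.
rewrite fdisjoint_sym in dBA.
rewrite -(ginv_sym dBA) -signr_odd -[in RHS]signr_odd -[X in _ * X]signr_odd.
rewrite oddD -signr_addb; congr (_ ^+ _); by case: (odd _); case: (odd _).
Qed.

Lemma gsign0l A : gsign fset0 A = 1.
Proof. by rewrite /gsign fdisjoint0X /ginv big_seq_fset0. Qed.
Lemma gsign0r A : gsign A fset0 = 1.
Proof.
rewrite /gsign fdisjointX0 /ginv big1 // => a _; by rewrite big_seq_fset0.
Qed.

Lemma gmulA : associative (@gmul k).
Proof.
move=> g1 g2 g3.
rewrite [RHS](big_morph (fun x : G => gmul x _) (fun _ _ => gmulDl _ _ _) (gmul0f _)).
rewrite gmulEl1; apply/eq_bigr=> k1 _.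
rewrite [LHS](big_morph (fun x : G => gmul _ x) (fun _ _ => gmulDr _ _ _) (gmulf0 _)).
rewrite [RHS](big_morph (fun x : G => gmul x _) (fun _ _ => gmulDl _ _ _) (gmul0f _)).
apply/eq_bigr=> k2 _.
rewrite [LHS](big_morph (fun x : G => gmul _ x) (fun _ _ => gmulDr _ _ _) (gmulf0 _)).
rewrite gmulEr1; apply/eq_bigr=> k3 _; rewrite !gmulUU fsetUA.
congr (<< _ *g _ >>).
have E := gsignA k1 k2 k3.
transitivity (g1@_k1 * g2@_k2 * g3@_k3 * (gsign k2 k3 * gsign k1 (k2 `|` k3))); first by ring.
by rewrite -E; ring.
Qed.

Lemma gmul1f : left_id (gone k) (@gmul k).
Proof.
move=> g; rewrite /gone gmulUg [RHS]monalgE.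
by apply/eq_bigr=> B _; rewrite mul1r gsign0l mulr1 fset0U.
Qed.

Lemma gmulf1 : right_id (gone k) (@gmul k).
Proof.
move=> g; rewrite /gone gmulgU [RHS]monalgE.
by apply/eq_bigr=> B _; rewrite mulr1 gsign0r mulr1 fsetU0.
Qed.

Lemma gone_neq0 : gone k != 0.
Proof. by apply/eqP/malgP=> /(_ fset0) /eqP; rewrite /gone !mcoeffsE oner_eq0. Qed.

End Grassmann.

Fact gkey : unit. Proof. exact: tt. Qed.
Definition gmulL (k : fieldType) : Grass k -> Grass k -> Grass k := locked_with gkey (@gmul k).
Lemma gmulLE (k : fieldType) (f g : Grass k) : gmulL f g = gmul f g.
Proof. by rewrite /gmulL /locked_with; case: gkey. Qed.

Section GRing.
Variable k : fieldType.
Lemma gmulLA : associative (@gmulL k).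
Proof. by move=> x y z; rewrite !gmulLE gmulA. Qed.
Lemma gmulL1f : left_id (gone k) (@gmulL k).
Proof. by move=> x; rewrite gmulLE gmul1f. Qed.
Lemma gmulLf1 : right_id (gone k) (@gmulL k).
Proof. by move=> x; rewrite gmulLE gmulf1. Qed.
Lemma gmulLDl : left_distributive (@gmulL k) +%R.
Proof. by move=> x y z; rewrite !gmulLE gmulDl. Qed.
Lemma gmulLDr : right_distributive (@gmulL k) +%R.
Proof. by move=> x y z; rewrite !gmulLE gmulDr. Qed.
End GRing.

Definition GR (k : fieldType) := Grass k.
HB.instance Definition _ (k : fieldType) := GRing.Zmodule.on (GR k).
HB.instance Definition _ (k : fieldType) := GRing.Zmodule_isRing.Build (GR k)
  (@gmulLA k) (@gmulL1f k) (@gmulLf1 k) (@gmulLDl k) (@gmulLDr k) (@gone_neq0 k).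

Section Parity.
Variable k : fieldType.
Local Notation R := (GR k).
Local Notation gsign := (gsign k).
Implicit Types (x y : R) (A B S : {fset nat}).

Definition evn (x : R) : R := [malg S in msupp x => if odd #|` S| then 0 else x@_S].
Definition odn (x : R) : R := [malg S in msupp x => if odd #|` S| then x@_S else 0].
Definition hp (b : bool) (x : R) := forall S, odd #|` S| != b -> x@_S = 0.

Lemma evnE x S : (evn x)@_S = if odd #|` S| then 0 else x@_S.
Proof. rewrite mcoeffE; case: msuppP => //; by case: ifP. Qed.
Lemma odnE x S : (odn x)@_S = if odd #|` S| then x@_S else 0.
Proof. rewrite mcoeffE; case: msuppP => //; by case: ifP. Qed.

Lemma evn_odn x : evn x + odn x = x.
Proof. by apply/malgP => S; rewrite mcoeffD evnE odnE; case: ifP; rewrite ?add0r ?addr0. Qed.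

Lemma hp_evn x : hp false (evn x).
Proof. by move=> S; rewrite evnE; case: ifP. Qed.
Lemma hp_odn x : hp true (odn x).
Proof. by move=> S; rewrite odnE; case: ifP. Qed.

Lemma gmulE x y : x * y = gmul x y.
Proof. exact: gmulLE. Qed.

Lemma gcoef x y S : (x * y)@_S =
  \sum_(A <- msupp x) \sum_(B <- msupp y) (x@_A * y@_B * gsign A B) *+ (A `|` B == S).
Proof.
rewrite gmulE /gmul raddf_sum /=; apply: eq_bigr => A _.
by rewrite raddf_sum /=; apply: eq_bigr => B _; rewrite mcoeffU.
Qed.

Lemma hpM a b x y : hp a x -> hp b y -> hp (a (+) b) (x * y).
Proof.
move=> hx hy S hS; rewrite gcoef big1 // => A _; rewrite big1 // => B _.
case: eqP => // eS; rewrite mulr1n.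
have [oA|oA] := eqVneq (odd #|` A|) a; last by rewrite hx // !mul0r.
have [oB|oB] := eqVneq (odd #|` B|) b; last by rewrite hy // mulr0 mul0r.
rewrite /gsign; case: ifP => dAB; last by rewrite mulr0.
move: hS; rewrite -eS cardfsU (disjoint_fsetI0 dAB) cardfs0 subn0 oddD oA oB.
by rewrite eqxx.
Qed.

Lemma gmul_exp x y : x * y =
  \sum_(A <- msupp x) \sum_(B <- msupp y) << x@_A * y@_B * gsign A B *g A `|` B >>.
Proof. by rewrite gmulE. Qed.

Lemma hp_cent x y : hp false x -> x * y = y * x.
Proof.
move=> hx; rewrite !gmul_exp [RHS]exchange_big /=; apply: eq_bigr => A _.
apply: eq_bigr => B _; rewrite fsetUC; congr (<< _ *g _ >>).
have [oA|oA] := boolP (odd #|` A|); first by rewrite hx ?oA //; ring.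
by rewrite (gsign_sym k A B) -signr_odd oddM (negbTE oA) /= mul1r; ring.
Qed.

Lemma hp_anti x y : hp true x -> hp true y -> x * y = - (y * x).
Proof.
move=> hx hy; rewrite !gmul_exp exchange_big /= -sumrN; apply: eq_bigr => A _.
rewrite -sumrN; apply: eq_bigr => B _; rewrite fsetUC -monalgUN; congr (<< _ *g _ >>).
have [oA|oA] := boolP (odd #|` A|); last by rewrite hy ?(negbTE oA) //; ring.
have [oB|oB] := boolP (odd #|` B|); last by rewrite hx ?(negbTE oB) //; ring.
by rewrite (gsign_sym k B A) -signr_odd oddM oA oB /= expr1; ring.
Qed.

Lemma hp_evnE x : hp false x -> evn x = x.
Proof. by move=> hx; apply/malgP => S; rewrite evnE; case: ifP => // oS; rewrite hx ?oS. Qed.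
Lemma hp_odnE x : hp true x -> odn x = x.
Proof. by move=> hx; apply/malgP => S; rewrite odnE; case: ifP => // oS; rewrite hx ?oS. Qed.
Lemma hp_evn0 x : hp true x -> evn x = 0.
Proof. by move=> hx; apply/malgP => S; rewrite evnE mcoeff0; case: ifP => // oS; rewrite hx ?oS. Qed.
Lemma hp_odn0 x : hp false x -> odn x = 0.
Proof. by move=> hx; apply/malgP => S; rewrite odnE mcoeff0; case: ifP => // oS; rewrite hx ?oS. Qed.

Lemma evnD x y : evn (x + y) = evn x + evn y.
Proof. by apply/malgP => S; rewrite mcoeffD !evnE mcoeffD; case: ifP; rewrite ?addr0. Qed.
Lemma odnD x y : odn (x + y) = odn x + odn y.
Proof. by apply/malgP => S; rewrite mcoeffD !odnE mcoeffD; case: ifP; rewrite ?addr0. Qed.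

Lemma evn_hom a b c d : hp false a -> hp false b -> hp true c -> hp true d ->
  evn ((a + c) * (b + d)) = a * b + c * d.
Proof.
move=> ha hb hc hd; rewrite mulrDl !mulrDr evnD (evnD (a * b)) (evnD (c * b)).
rewrite (hp_evnE (hpM ha hb)) (hp_evnE (hpM hc hd)).
rewrite (hp_evn0 (hpM ha hd)) (hp_evn0 (hpM hc hb)).
by rewrite addr0 add0r.
Qed.

Lemma odn_hom a b c d : hp false a -> hp false b -> hp true c -> hp true d ->
  odn ((a + c) * (b + d)) = a * d + c * b.
Proof.
move=> ha hb hc hd; rewrite mulrDl !mulrDr odnD (odnD (a * b)) (odnD (c * b)).
rewrite (hp_odn0 (hpM ha hb)) (hp_odn0 (hpM hc hd)).
rewrite (hp_odnE (hpM ha hd)) (hp_odnE (hpM hc hb)).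
by rewrite addr0 add0r.
Qed.

Lemma evnM x y : evn (x * y) = evn x * evn y + odn x * odn y.
Proof.
have := evn_hom (hp_evn x) (hp_evn y) (hp_odn x) (hp_odn y).
by rewrite !evn_odn.
Qed.

Lemma odnM x y : odn (x * y) = evn x * odn y + odn x * evn y.
Proof.
have := odn_hom (hp_evn x) (hp_evn y) (hp_odn x) (hp_odn y).
by rewrite !evn_odn.
Qed.

Lemma evn_cent x y : evn x * y = y * evn x.
Proof. exact/hp_cent/hp_evn. Qed.
Lemma odn_anti x y : odn x * odn y = - (odn y * odn x).
Proof. exact: (hp_anti (hp_odn x) (hp_odn y)). Qed.

End Parity.

Section GRChar.
Variable k : fieldType.
Local Notation R := (GR k).

Lemma GR_char p : p \in [pchar k] -> p \in [pchar R].
Proof.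
move=> cp; rewrite inE /=; apply/andP; split; first exact: pcharf_prime cp.
apply/eqP/malgP => S; rewrite mcoeffMn mcoeff0.
have -> : (1 : R)@_S = 1 *+ (fset0 == S) by exact: mcoeffU.
by rewrite mulrnAC (pcharf0 cp) mul0rn.
Qed.

Lemma GR_OO p (cp : p \in [pchar k]) (p_gt2 : (2 < p)%N) (x : R) : odn x * odn x = 0.
Proof.
have h : odn x * odn x = - (odn x * odn x) by apply: odn_anti.
have h2 : (odn x * odn x) *+ 2 = 0 by rewrite mulr2n {1}h addNr.
apply/malgP => S; move/malgP: h2 => /(_ S); rewrite mcoeffMn mcoeff0 => /eqP.
rewrite -mulr_natr mulf_eq0 => /orP [/eqP //|].
rewrite -(dvdn_pcharf cp) => /dvdn_leq h3.
by move: (leq_trans p_gt2 (h3 isT)).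
Qed.
End GRChar.

Section Psi.
Variables (k : fieldType) (psi : FA k -> Grass k) (hpsi : is_unital_hom_G psi).
Let ps : FA k -> GR k := psi.

Lemma psiD f g : ps (f + g) = ps f + ps g.
Proof. by case: hpsi. Qed.
Lemma psi0 : ps 0 = 0.
Proof.
have h := psiD 0 0; rewrite addr0 in h.
by apply: (@addrI _ (ps 0)); rewrite addr0 -h.
Qed.
Lemma psiN f : ps (- f) = - ps f.
Proof. by apply/eqP; rewrite -addr_eq0 -psiD addNr psi0. Qed.
Lemma psiB f g : ps (f - g) = ps f - ps g.
Proof. by rewrite psiD psiN. Qed.
Lemma psiM f g : ps (f * g) = ps f * ps g.
Proof. by rewrite [RHS]gmulLE; case: hpsi. Qed.
Lemma psi1 : ps 1 = 1.
Proof. by case: hpsi. Qed.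
Lemma psiX f n : ps (f ^+ n) = ps f ^+ n.
Proof. by elim: n => [|n IH]; rewrite ?expr0 ?psi1 // !exprS psiM IH. Qed.
Lemma psi_kappa p u v : ps (kappa p u v) = kap p (ps u) (ps v).
Proof. exact: (@kap_morph _ _ ps p psiM psiB psiX u v). Qed.
Lemma psi_wm p m u : ps (wm p m u) =
  \prod_(1 <= r < m.+1) kap p (ps (u (2 * r).-1)) (ps (u (2 * r))).
Proof.
rewrite /wm (big_morph ps psiM psi1); apply: eq_bigr => r _; exact: psi_kappa.
Qed.
End Psi.

Section Subst.
Variables (k : fieldType) (sg : nat -> nat).
Local Notation FA := (FA k).

Lemma malgC_comm (c : k) (x : FA) : c%:MP * x = x * c%:MP.
Proof.
rewrite mul_malgC malgM_def fgmulgU malgZ_def /fgscale.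
by apply: eq_bigr => m _; rewrite mulm1 mulrC.
Qed.

Definition ren (m : fmonom nat) : FA := << FMonom (map sg m) >>.

Lemma fmmulE' (a b : fmonom nat) : mmul a b = FMonom (a ++ b).
Proof. exact: fmmulE. Qed.
Lemma fmoneE' : (mone : fmonom nat) = FMonom [::].
Proof. exact: fmoneE. Qed.

Lemma ren_morph : mmorphism ren.
Proof.
split.
  move=> m1 m2; rewrite /ren malgM_def fgmulUU mulr1.
  by rewrite !fmmulE' /= map_cat.
by rewrite /ren fmoneE' /= -fmoneE'.
Qed.

HB.instance Definition _ := isMultiplicative.Build _ _ ren ren_morph.

Definition phi : FA -> FA := mmap (malgC : k -> FA) ren.

Lemma phi_comm (g : FA) m m' : GRing.comm ((g@_m)%:MP : FA) (ren m').
Proof. exact: malgC_comm. Qed.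

Lemma phiM f g : phi (f * g) = phi f * phi g.
Proof. exact: (commr_mmap_is_multiplicative phi_comm).1. Qed.
Lemma phi1 : phi 1 = 1.
Proof. exact: (commr_mmap_is_multiplicative phi_comm).2. Qed.
Lemma phiD f g : phi (f + g) = phi f + phi g.
Proof. exact: mmapD. Qed.
Lemma phiB f g : phi (f - g) = phi f - phi g.
Proof. exact: mmapB. Qed.
Lemma phiZ (a : k) f : phi (a *: f) = a *: phi f.
Proof. by rewrite /phi mmapZ mul_malgC. Qed.
Lemma phiX f n : phi (f ^+ n) = phi f ^+ n.
Proof. by elim: n => [|n IH]; rewrite ?expr0 ?phi1 // !exprS phiM IH. Qed.
Lemma phi_xv i : phi (xv k i) = xv k (sg i).
Proof.
rewrite /phi /xv mmapU /ren.
transitivity ((1 : k)%:MP * << FMonom (map sg (fmu i)) >> : FA); first by [].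
by rewrite mpolyC1E mul1r !fmuE.
Qed.

Lemma phi_k0 f : in_k0 f -> in_k0 (phi f).
Proof.
rewrite /in_k0 /phi mmapE => hf; rewrite raddf_sum big1 // => m _.
transitivity (((f@_m)%:MP * ren m : FA)@_(fmone nat)); first by [].
rewrite mcoeffCM /ren mcoeffU.
have [->|ne] := eqVneq m (fmone nat); first by rewrite hf mul0r.
case: eqP => [e|]; last by rewrite mulr0.
by exfalso; move: ne e; rewrite fmoneE; case: m => [[|a s]] //= _.
Qed.

Lemma phi_endo : is_endo0 phi.
Proof.
split => [f|f g _ _|a f _|f g _ _]; [exact: phi_k0|exact: phiD|exact: phiZ|exact: phiM].
Qed.

End Subst.

Lemma half_idx (i m : nat) : (1 <= i <= 2 * m)%N ->
  exists r0, (1 <= r0 <= m)%N /\ (i = 2 * r0 \/ i = (2 * r0).-1)%N.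
Proof.
move=> hi; exists (uphalf i); have := odd_double_half i; rewrite uphalf_half.
by case: (odd i) => /= h; (split; [lia|]); [right|left]; lia.
Qed.

Lemma phi_wm (k : fieldType) sg p m (u : nat -> FA k) :
  phi sg (wm p m u) = wm p m (fun j => phi sg (u j)).
Proof.
rewrite /wm (big_morph (phi sg) (@phiM k sg) (@phi1 k sg)); apply: eq_bigr => r _.
exact: (@kap_morph _ _ (phi sg) p (@phiM k sg) (@phiB k sg) (@phiX k sg)).
Qed.

Lemma wE (k : fieldType) p m : w k p m = wm p m (xv k). Proof. by []. Qed.
Lemma wmE (k : fieldType) p m (u : nat -> FA k) :
  wm p m u = \prod_(1 <= r < m.+1) kappa p (u (2 * r).-1) (u (2 * r)).
Proof. by []. Qed.

Opaque wm w.

Unset Implicit Arguments.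
Local Close Scope fset_scope.
Local Open Scope ring_scope.

Theorem lemma3p4 (k : fieldType) (p : nat) (charp : p \in [pchar k])
  (p_gt2 : (2 < p)%N) (m : nat) (m_ge1 : (1 <= m)%N) :
  (forall i : nat, (1 <= i <= 2 * m)%N ->
     exists g t : FA k,
       S0closure (fun h => exists j : nat, h = xv k 0 ^+ p * w k p j) g /\
       TG t /\
       wm p m (fun j => if j == i then xv k i * xv k (2 * m).+1 else xv k j)
         = g + t) /\
  (forall (i : nat) (alpha : k), (1 <= i <= 2 * m)%N ->
     wm p m (fun j => if j == i then alpha *: xv k i else xv k j)
       = alpha ^+ p *: w k p m).
Proof.
have p_gt0 : (0 < p)%N by apply: leq_trans p_gt2.
split.
  move=> i hi.
  have [r0 [hr0 hir0]] := half_idx hi.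
  set L := wm p m _.
  pose ysub := fun j => if j == i then xv k (2 * m).+1 else xv k j.
  pose g := xv k i ^+ p * wm p m ysub + xv k (2 * m).+1 ^+ p * w k p m.
  exists g, (L - g); split; last split; last by rewrite addrC subrK.
    move=> V [Vsub V0 VD VZ] HV Vphi; rewrite /g; apply: VD.
      pose s1 := fun j => if j == 0%N then i else if j == i then (2 * m).+1 else j.
      have E : wm p m (fun j => phi s1 (xv k j)) = wm p m ysub.
        apply: eq_big_nat => r /andP[hr1 _]; rewrite !phi_xv /ysub /s1.
        have -> : ((2 * r).-1 == 0%N) = false by apply/eqP; lia.
        have -> : (2 * r == 0%N) = false by apply/eqP; lia.
        by case: ((2 * r).-1 == i); case: (2 * r == i).
      have -> : xv k i ^+ p * wm p m ysub = phi s1 (xv k 0 ^+ p * w k p m).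
        by rewrite phiM phiX phi_xv wE phi_wm E /s1 eqxx.
      by apply: Vphi; [exact: phi_endo | apply: HV; exists m].
    pose s2 := fun j => if j == 0%N then (2 * m).+1 else j.
    have E : wm p m (fun j => phi s2 (xv k j)) = w k p m.
      apply: eq_big_nat => r /andP[hr1 _]; rewrite !phi_xv /s2.
      have -> : ((2 * r).-1 == 0%N) = false by apply/eqP; lia.
      by have -> : (2 * r == 0%N) = false by apply/eqP; lia.
    have -> : xv k (2 * m).+1 ^+ p * w k p m = phi s2 (xv k 0 ^+ p * w k p m).
      by rewrite phiM phiX phi_xv [in RHS]wE phi_wm E /s2 eqxx.
    by apply: Vphi; [exact: phi_endo | apply: HV; exists m].
  move=> psi hpsi.
  have EO := @evn_odn k; have Ecent := @evn_cent k; have Oanti := @odn_anti k.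
  have OO := GR_OO charp p_gt2; have EM := @evnM k; have OM := @odnM k.
  have cG := GR_char charp.
  have HL : psi L = \prod_(1 <= r < m.+1) kap (R := GR k) p
      (psi ((fun j => if j == i then xv k i * xv k (2 * m).+1 else xv k j) (2 * r).-1))
      (psi ((fun j => if j == i then xv k i * xv k (2 * m).+1 else xv k j) (2 * r))).
    exact: (psi_wm hpsi p m _).
  have Hg : psi g = (psi (xv k i) : GR k) ^+ p *
      \prod_(1 <= r < m.+1) kap (R := GR k) p (psi (ysub (2 * r).-1)) (psi (ysub (2 * r))) +
      (psi (xv k (2 * m).+1) : GR k) ^+ p *
      \prod_(1 <= r < m.+1) kap (R := GR k) p (psi (xv k (2 * r).-1)) (psi (xv k (2 * r))).
    rewrite /g; apply: etrans; first exact: psiD hpsi _ _.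
    apply: f_equal2.
      apply: etrans; first exact: psiM hpsi _ _.
      apply: f_equal2; first exact: psiX hpsi _ _.
      exact: (psi_wm hpsi p m ysub).
    apply: etrans; first exact: psiM hpsi _ _.
    apply: f_equal2; first exact: psiX hpsi _ _.
    rewrite wE; exact: (psi_wm hpsi p m _).
  transitivity (psi L - psi g); first exact: psiB hpsi L g.
  rewrite Hg HL; apply/eqP; rewrite subr_eq0; apply/eqP.
  apply: (@prod_lin (GR k) _ _ _ _ _ r0).
  - exact: (cent_powp EO Ecent OO cG p_gt2).
  - exact: (cent_powp EO Ecent OO cG p_gt2).
  - lia.
  - move=> r hr /=; rewrite /ysub.
    have -> : ((2 * r).-1 == i) = false by apply/eqP; lia.
    by have -> : (2 * r == i) = false by apply/eqP; lia.
  - move=> r hr /=.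
    have -> : ((2 * r).-1 == i) = false by apply/eqP; lia.
    by have -> : (2 * r == i) = false by apply/eqP; lia.
  rewrite /ysub /=; case: hir0 => hi0.
    have -> : ((2 * r0).-1 == i) = false by apply/eqP; lia.
    have -> : (2 * r0 == i) = true by apply/eqP; lia.
    rewrite -hi0.
    apply: etrans; first (apply: (congr1 (kap p _)); exact: psiM hpsi _ _).
    exact: (kapMr EO Ecent Oanti OO EM OM cG p_gt2).
  have -> : ((2 * r0).-1 == i) = true by apply/eqP; lia.
  have -> : (2 * r0 == i) = false by apply/eqP; lia.
  rewrite -hi0.
  apply: etrans; first (apply: (congr1 (fun z => kap p z _)); exact: psiM hpsi _ _).
  exact: (kapMl EO Ecent Oanti OO EM OM cG p_gt2).
move=> i alpha hi.
have [r0 [hr0 hir0]] := half_idx hi.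
pose G := fun r => kappa p (xv k (2 * r).-1) (xv k (2 * r)).
pose F := fun r => kappa p ((fun j => if j == i then alpha *: xv k i else xv k j) (2 * r).-1)
                           ((fun j => if j == i then alpha *: xv k i else xv k j) (2 * r)).
have E : \prod_(1 <= r < m.+1) F r =
    (alpha ^+ p)%:MP * \prod_(1 <= r < m.+1) G r + 0 * \prod_(1 <= r < m.+1) G r.
  apply: (@prod_lin (FA k) F G G _ _ r0).
  - exact: malgC_comm.
  - by move=> y; rewrite mul0r mulr0.
  - lia.
  - move=> r hr; rewrite /F /G /=.
    have -> : ((2 * r).-1 == i) = false by apply/eqP; lia.
    by have -> : (2 * r == i) = false by apply/eqP; lia.
  - move=> r hr; rewrite /F /G /=.
    have -> : ((2 * r).-1 == i) = false by apply/eqP; lia.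
    by have -> : (2 * r == i) = false by apply/eqP; lia.
  rewrite /F /G /= mul0r addr0 rmorphXn; case: hir0 => hi0.
    have -> : ((2 * r0).-1 == i) = false by apply/eqP; lia.
    have -> : (2 * r0 == i) = true by apply/eqP; lia.
    rewrite -mul_malgC -hi0.
    exact: (kap_centr p_gt0 _ _ (malgC_comm alpha)).
  have -> : ((2 * r0).-1 == i) = true by apply/eqP; lia.
  have -> : (2 * r0 == i) = false by apply/eqP; lia.
  rewrite -mul_malgC -hi0.
  exact: (kap_centl p_gt0 _ _ (malgC_comm alpha)).
rewrite wE !wmE.
apply: etrans; first exact: E.
by rewrite mul0r addr0 mul_malgC.
Qed.
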